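(* Let $W=\langle w_1,\ldots,w_n\rangle$ be a weave. (a) If $W$ is FF, then $W$ is transitive. (b) If $n$ is even and $W$ is FB, then $\{w_2,\ldots,w_n\}$ is a homogeneous set of $W$. (c) If $n$ is even and $W$ is BF, then $\{w_1,\ldots,w_{n-1}\}$ is a homogeneous set of $W$. (d) If $n$ is even and $W$ is BB, then $\{w_1,w_n\}$ is a homogeneous set of $W$. (e) If $n$ is odd and $W$ is FB, then $\{w_1,\ldots,w_{n-1}\}$ is a homogeneous set of $W$. (f) If $n$ is odd and $W$ is BF, then $W$ is isomorphic to $U_n$. (g) If $n$ is odd and $W$ is BB, then $W$ is isomorphic to $T_n$. Now let $v\notin V(W)$ be a vertex such that $v\to w_i$ for odd $i$ and $w_i\to v$ for even $i$, and let $W+v$ be the resulting tournament on $V(W)\cup\{v\}$. (h) If $n$ is odd and $W$ is FF or FB, then $\{v,w_1,\ldots,w_{n-1}\}$ is a homogeneous set of $W+v$. (i) If $n$ is odd and $W$ is BF or BB, then $\{v,w_n\}$ is a homogeneous set of $W+v$. (j) If $n$ is even and $W$ is FF, then $W+v$ is isomorphic to $W_{n+1}$. (k) If $n$ is even and $W$ is FB or BF, then $W+v$ is isomorphic to $U_{n+1}$. (l) If $n$ is even and $W$ is BB, then $W+v$ is isomorphic to $T_{n+1}$.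
   Context: A tournament is a finite, non-null, loopless directed graph in which for any two distinct vertices $u,v$ there is exactly one edge with both ends in $\{u,v\}$; write $u\to v$ for the edge from $u$ to $v$, and $X\Rightarrow Y$ if $x\to y$ for all $x\in X,y\in Y$. A tournament is transitive if its vertices can be ordered so that all edges go forward. A homogeneous set of $G$ is a set $X\subseteq V(G)$ such that each vertex outside $X$ either has edges to all of $X$ or edges from all of $X$. A weave $\langle w_1,\dots,w_n\rangle$ is a tournament on $w_1,\dots,w_n$ such that: (1) $w_i\to w_j$ whenever $i<j$ and $i,j$ have opposite parity; (2) either (2a) $w_i\to w_j$ for all $i<j$ both odd, or (2b) $w_j\to w_i$ for all $i<j$ both odd; (3) either (3a) $w_i\to w_j$ for all $i<j$ both even, or (3b) $w_j\to w_i$ for all $i<j$ both even. It is FF if (2a),(3a) hold; FB if (2a),(3b); BF if (2b),(3a); BB if (2b),(3b). For $n=2k+1$: $T_n$ is the tournament on $v_1,\dots,v_n$ with $v_i\to v_j$ iff $j\equiv i+1,\dots,i+k\pmod n$; $U_n$ is obtained from $T_n$ by reversing all edges with both ends in $\{v_1,\dots,v_k\}$; $W_n$ is the tournament on $x_1,\dots,x_n$ with $x_i\to x_j$ for $1\le i<j\le n-1$ and $\{x_2,x_4,\dots,x_{n-1}\}\Rightarrow x_n\Rightarrow\{x_1,x_3,\dots,x_{n-2}\}$. *)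

(* Defs.v *)
From mathcomp Require Import all_boot.
Set Implicit Arguments. Unset Strict Implicit. Unset Printing Implicit Defensive.

Definition tournament (T : finType) (E : rel T) : Prop :=
  (forall u, ~~ E u u) /\ (forall u v, u != v -> E u v != E v u).

Definition transitive_tour (T : finType) (E : rel T) : Prop :=
  exists rk : T -> nat, injective rk /\ forall u v, E u v -> rk u < rk v.

Definition homogeneous (T : finType) (E : rel T) (X : {set T}) : Prop :=
  forall y, y \notin X ->
    (forall x, x \in X -> E y x) \/ (forall x, x \in X -> E x y).

Definition isomorphic (T1 T2 : finType) (E1 : rel T1) (E2 : rel T2) : Prop :=
  exists f : T1 -> T2, bijective f /\ forall u v, E1 u v = E2 (f u) (f v).

(* Vertex w_{i+1} of a weave on n vertices is represented by i : 'I_n.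
   So "w_a with a odd" means odd (i.+1). *)
Definition weave_base (n : nat) (E : rel 'I_n) : Prop :=
  tournament E /\
  forall i j : 'I_n, i < j -> odd i.+1 != odd j.+1 -> E i j.

Definition odd_fwd n (E : rel 'I_n) : Prop :=
  forall i j : 'I_n, i < j -> odd i.+1 -> odd j.+1 -> E i j.
Definition odd_bwd n (E : rel 'I_n) : Prop :=
  forall i j : 'I_n, i < j -> odd i.+1 -> odd j.+1 -> E j i.
Definition even_fwd n (E : rel 'I_n) : Prop :=
  forall i j : 'I_n, i < j -> ~~ odd i.+1 -> ~~ odd j.+1 -> E i j.
Definition even_bwd n (E : rel 'I_n) : Prop :=
  forall i j : 'I_n, i < j -> ~~ odd i.+1 -> ~~ odd j.+1 -> E j i.

Definition weaveFF n (E : rel 'I_n) := [/\ weave_base E, odd_fwd E & even_fwd E].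
Definition weaveFB n (E : rel 'I_n) := [/\ weave_base E, odd_fwd E & even_bwd E].
Definition weaveBF n (E : rel 'I_n) := [/\ weave_base E, odd_bwd E & even_fwd E].
Definition weaveBB n (E : rel 'I_n) := [/\ weave_base E, odd_bwd E & even_bwd E].

(* T_m (m = 2k+1) on v_1..v_m, v_{i+1} represented by i : 'I_m:
   i -> j iff (j - i) mod m in {1..k}. *)
Definition Trel (m : nat) : rel 'I_m :=
  fun i j => let d := (j + m - i) %% m in (1 <= d) && (d <= m./2).

(* U_m: reverse the edges with both ends in {v_1..v_k}. *)
Definition Urel (m : nat) : rel 'I_m :=
  fun i j => if (i < m./2) && (j < m./2) then Trel j i else Trel i j.

(* W_m on x_1..x_m, x_{i+1} represented by i : 'I_m. *)
Definition Wrel (m : nat) : rel 'I_m :=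
  fun i j =>
    if (i < m.-1) && (j < m.-1) then i < j
    else if j == m.-1 :> nat then (i != m.-1 :> nat) && ~~ odd i.+1
    else (i == m.-1 :> nat) && odd j.+1.

(* W + v : the new vertex v is None; v -> w_a for odd a, w_a -> v for even a. *)
Definition plusv n (E : rel 'I_n) : rel (option 'I_n) :=
  fun a b => match a, b with
  | Some i, Some j => E i j
  | None, Some j => odd j.+1
  | Some i, None => ~~ odd i.+1
  | None, None => false
  end.

(* Main.v *)
Require Import Defs.
From mathcomp Require Import all_boot zify.
Set Implicit Arguments. Unset Strict Implicit. Unset Printing Implicit Defensive.


Definition wl (fa fb : bool) (i j : nat) := odd (j - i) || (if odd i then fb else fa).
Definition wn (fa fb : bool) (i j : nat) :=
  if i < j then wl fa fb i j else if j < i then ~~ wl fa fb j i else false.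

Lemma tour_neg (T : finType) (E : rel T) u v : tournament E -> u != v -> E u v = ~~ E v u.
Proof. by case=> _ h /h; case: (E u v); case: (E v u). Qed.

Lemma weave_eq n (E : rel 'I_n) fa fb : weave_base E ->
  (forall i j : 'I_n, i < j -> odd i.+1 -> odd j.+1 -> E i j = fa) ->
  (forall i j : 'I_n, i < j -> ~~ odd i.+1 -> ~~ odd j.+1 -> E i j = fb) ->
  forall i j : 'I_n, E i j = wn fa fb i j.
Proof.
case=> hT hX hA hB.
have lt : forall i j : 'I_n, i < j -> E i j = wl fa fb i j.
  move=> i j ij; rewrite /wl.
  case oi: (odd i); case oj: (odd j).
  - rewrite hB //=; [lia| by rewrite oi | by rewrite oj].
  - rewrite hX //= ?oi ?oj //; lia.
  - rewrite hX //= ?oi ?oj //; lia.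
  - rewrite hA //= ?oi ?oj //; lia.
move=> i j; rewrite /wn; case: ltngtP => h.
- exact: lt.
- rewrite tour_neg //; first by rewrite lt.
  by apply/eqP=> e; move: h; rewrite e ltnn.
- have -> : i = j by apply: val_inj.
  by case: hT => /(_ j) /negbTE.
Qed.

Definition fnat (m i : nat) := if odd i then m./2 - 1 - i./2 else m - 1 - i./2.

Lemma fnat_lt m i : 0 < m -> fnat m i < m.
Proof. rewrite /fnat; case: (odd i); lia. Qed.

Lemma fnat_inj m i j : odd m -> i < m -> j < m -> fnat m i = fnat m j -> i = j.
Proof. rewrite /fnat => hm hi hj; case oi: (odd i); case oj: (odd j); lia. Qed.

Lemma modm a b m : a < m -> b < m ->
  (b + m - a) %% m = if a <= b then b - a else b + m - a.
Proof.
move=> ha hb; case: leqP => h.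
- have -> : b + m - a = (b - a) + m by lia.
  by rewrite modnDr modn_small //; lia.
- by rewrite modn_small //; lia.
Qed.

Ltac splitifs := repeat match goal with |- context [if ?b then _ else _] => case: (boolP b) => ? end.

Lemma core_T m i j : odd m -> i < m -> j < m ->
  let d := (fnat m j + m - fnat m i) %% m in ((1 <= d) && (d <= m./2)) = wn false false i j.
Proof.
move=> hm hi hj /=; rewrite modm; try exact: fnat_lt.
2,3: apply: fnat_lt; lia.
rewrite /wn /wl /fnat; case oi: (odd i); case oj: (odd j); splitifs; lia.
Qed.


Lemma core_U m i j : odd m -> i < m -> j < m ->
  (if (fnat m i < m./2) && (fnat m j < m./2) then
    let d := (fnat m i + m - fnat m j) %% m in (1 <= d) && (d <= m./2)
   else let d := (fnat m j + m - fnat m i) %% m in (1 <= d) && (d <= m./2))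
  = wn false true i j.
Proof.
move=> hm hi hj /=; rewrite !modm; try (apply: fnat_lt; lia).
rewrite /wn /wl /fnat; case oi: (odd i); case oj: (odd j); splitifs; lia.
Qed.

Definition ford m (hm : 0 < m) (i : 'I_m) : 'I_m := Ordinal (@fnat_lt m i hm).

Lemma ford_bij m (hm : 0 < m) : odd m -> bijective (ford hm).
Proof.
move=> om; apply: injF_bij => i j /(congr1 val) /= e; apply: val_inj.
exact: (fnat_inj om (ltn_ord i) (ltn_ord j) e).
Qed.

Lemma T_ford m (hm : 0 < m) (i j : 'I_m) : odd m ->
  Trel (ford hm i) (ford hm j) = wn false false i j.
Proof. move=> om; exact: core_T. Qed.

Lemma U_ford m (hm : 0 < m) (i j : 'I_m) : odd m ->
  Urel (ford hm i) (ford hm j) = wn false true i j.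
Proof. move=> om; exact: core_U. Qed.

Lemma iso_of (T1 T2 : finType) (E1 : rel T1) (E2 : rel T2) (f : T1 -> T2) :
  bijective f -> (forall u v, E1 u v = E2 (f u) (f v)) -> isomorphic E1 E2.
Proof. by move=> bf h; exists f. Qed.

Lemma weq n (E : rel 'I_n) (fa fb : bool) : weave_base E ->
  (if fa then odd_fwd E else odd_bwd E) ->
  (if fb then even_fwd E else even_bwd E) -> forall i j, E i j = wn fa fb i j.
Proof.
move=> wb ha hb; apply: weave_eq => // i j ij oi oj.
- case: fa ha => h; first exact: h.
  rewrite tour_neg; [by rewrite h|by case: wb|].
  by apply/eqP=> e; move: ij; rewrite e ltnn.
- case: fb hb => h; first exact: h.
  rewrite tour_neg; [by rewrite h|by case: wb|].
  by apply/eqP=> e; move: ij; rewrite e ltnn.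
Qed.

Definition gmax n (a : option 'I_n) : 'I_n.+1 :=
  if a is Some i then widen_ord (leqnSn n) i else ord_max.
Definition sh n (i : 'I_n) : 'I_n.+1 := Ordinal (ltn_ord i : i.+1 < n.+1).
Definition g0 n (a : option 'I_n) : 'I_n.+1 :=
  if a is Some i then sh i else ord0.

Lemma gmax_bij n : bijective (@gmax n).
Proof.
apply: inj_card_bij; last by rewrite card_option !card_ord.
case=> [i|] [j|] /(congr1 val) /= e.
- by apply: congr1; apply: val_inj.
- have := ltn_ord i; lia.
- have := ltn_ord j; lia.
- by [].
Qed.

Lemma g0_bij n : bijective (@g0 n).
Proof.
apply: inj_card_bij; last by rewrite card_option !card_ord.
by case=> [i|] [j|] /(congr1 val) //= [e]; apply: congr1; apply: val_inj.
Qed.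
Unset Implicit Arguments.

Theorem proposition3p2 (n : nat) (hn : 0 < n) (E : rel 'I_n) :
  (* (a) *)
  (weaveFF E -> transitive_tour E) /\
  (* (b) *)
  (~~ odd n -> weaveFB E -> homogeneous E [set i : 'I_n | 0 < i]) /\
  (* (c) *)
  (~~ odd n -> weaveBF E -> homogeneous E [set i : 'I_n | i < n.-1]) /\
  (* (d) *)
  (~~ odd n -> weaveBB E ->
     homogeneous E [set i : 'I_n | (i == 0 :> nat) || (i == n.-1 :> nat)]) /\
  (* (e) *)
  (odd n -> weaveFB E -> homogeneous E [set i : 'I_n | i < n.-1]) /\
  (* (f) *)
  (odd n -> weaveBF E -> isomorphic E (@Urel n)) /\
  (* (g) *)
  (odd n -> weaveBB E -> isomorphic E (@Trel n)) /\
  (* (h) *)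
  (odd n -> weaveFF E \/ weaveFB E ->
     homogeneous (plusv E)
       [set a : option 'I_n | if a is Some i then i < n.-1 else true]) /\
  (* (i) *)
  (odd n -> weaveBF E \/ weaveBB E ->
     homogeneous (plusv E)
       [set a : option 'I_n | if a is Some i then i == n.-1 :> nat else true]) /\
  (* (j) *)
  (~~ odd n -> weaveFF E -> isomorphic (plusv E) (@Wrel n.+1)) /\
  (* (k) *)
  (~~ odd n -> weaveFB E \/ weaveBF E -> isomorphic (plusv E) (@Urel n.+1)) /\
  (* (l) *)
  (~~ odd n -> weaveBB E -> isomorphic (plusv E) (@Trel n.+1)).
Proof.
have ho := @ltn_ord n.
split.
  case=> wb ha hb; have e := @weq n E true true wb ha hb.
  exists val; split; first exact: val_inj.
  move=> u v; rewrite e /wn /wl; splitifs; lia.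
split.
  move=> _ [wb ha hb] y; have e := @weq n E true false wb ha hb.
  rewrite inE => hy; left => x; rewrite inE => hx.
  have := ho x; have := ho y; rewrite e /wn /wl; splitifs; lia.
split.
  move=> on [wb ha hb] y; have e := @weq n E false true wb ha hb.
  rewrite inE => hy; right => x; rewrite inE => hx.
  have := ho x; have := ho y; rewrite e /wn /wl; splitifs; lia.
split.
  move=> on [wb ha hb] y; have e := @weq n E false false wb ha hb.
  rewrite inE => hy; case oy: (odd y); [right|left] => x; rewrite inE => hx;
  have := ho x; have := ho y; rewrite e /wn /wl; splitifs; lia.
split.
  move=> on [wb ha hb] y; have e := @weq n E true false wb ha hb.
  rewrite inE => hy; right => x; rewrite inE => hx.
  have := ho x; have := ho y; rewrite e /wn /wl; splitifs; lia.
split.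
  move=> on [wb ha hb]; have e := @weq n E false true wb ha hb.
  apply: (iso_of (ford_bij hn on)) => u v; by rewrite U_ford // e.
split.
  move=> on [wb ha hb]; have e := @weq n E false false wb ha hb.
  apply: (iso_of (ford_bij hn on)) => u v; by rewrite T_ford // e.
split.
  move=> on hw.
  case: hw => [[wb ha hb]|[wb ha hb]];
  [have e := @weq n E true true wb ha hb | have e := @weq n E true false wb ha hb];
  (case=> [y|]; rewrite inE // => hy;
  right; case=> [x|]; rewrite inE //= => hx;
  [by have := ho x; have := ho y; rewrite e /wn /wl; splitifs; lia
  | by have := ho y; lia]).
split.
  move=> on hw.
  case: hw => [[wb ha hb]|[wb ha hb]];
  [have e := @weq n E false true wb ha hb | have e := @weq n E false false wb ha hb];
  (case=> [y|]; rewrite inE // => hy;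
  case oy: (odd y); [left|right]; case=> [x|]; rewrite inE //= => hx;
    have := ho y; rewrite ?e /wn /wl; try have := ho x; splitifs; lia).
split.
  move=> on [wb ha hb]; have e := @weq n E true true wb ha hb.
  apply: (iso_of (@gmax_bij n)) => [[u|] [v|]] /=; rewrite /Wrel /= ?e /wn /wl;
    try have := ho u; try have := ho v; splitifs; lia.
split.
  move=> on [[wb ha hb]|[wb ha hb]].
    have e := @weq n E true false wb ha hb.
    have hn1 : 0 < n.+1 by [].
    have on1 : odd n.+1 by rewrite /= on.
    apply: (iso_of (bij_comp (ford_bij hn1 on1) (@g0_bij n))) => u v /=.
    rewrite U_ford //.
    case: u v => [u|] [v|] /=; rewrite ?e /wn /wl;
    try have := ho u; try have := ho v; splitifs; lia.
  have e := @weq n E false true wb ha hb.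
  have hn1 : 0 < n.+1 by [].
  have on1 : odd n.+1 by rewrite /= on.
  apply: (iso_of (bij_comp (ford_bij hn1 on1) (@gmax_bij n))) => u v /=.
  rewrite U_ford //.
  case: u v => [u|] [v|] /=; rewrite ?e /wn /wl;
  try have := ho u; try have := ho v; splitifs; lia.
move=> on [wb ha hb]; have e := @weq n E false false wb ha hb.
have hn1 : 0 < n.+1 by [].
have on1 : odd n.+1 by rewrite /= on.
apply: (iso_of (bij_comp (ford_bij hn1 on1) (@gmax_bij n))) => u v /=.
rewrite T_ford //.
case: u v => [u|] [v|] /=; rewrite ?e /wn /wl;
try have := ho u; try have := ho v; splitifs; lia.
Qed.
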